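(* Let $X$ and $Y$ be Banach spaces and $\kappa$ an infinite cardinal. Then $X\oplus_\infty Y$ is $\mathrm{ASQ}_{<\kappa}$ if and only if $X$ or $Y$ is $\mathrm{ASQ}_{<\kappa}$. Likewise, $X\oplus_\infty Y$ is $\mathrm{SQ}_{<\kappa}$ if and only if $X$ or $Y$ is $\mathrm{SQ}_{<\kappa}$.
   Context: $X\oplus_\infty Y$ is $X\times Y$ with norm $\|(x,y)\|=\max\{\|x\|,\|y\|\}$. A Banach space $Z$ is $\mathrm{ASQ}_{<\kappa}$ if for every set $A\subset S_Z$ with $|A|<\kappa$ and every $\varepsilon>0$ there exists $y\in S_Z$ with $\|x\pm y\|\le 1+\varepsilon$ for all $x\in A$; $Z$ is $\mathrm{SQ}_{<\kappa}$ if for every such $A$ there exists $y\in S_Z$ with $\|x\pm y\|\le 1$ for all $x\in A$. *)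

(* Defs.v *)
From HB Require Import structures.
From mathcomp Require Import all_boot all_order all_algebra.
From mathcomp Require Import all_classical all_reals all_analysis.
Set Implicit Arguments. Unset Strict Implicit. Unset Printing Implicit Defensive.
Import Order.TTheory GRing.Theory Num.Theory.
Import numFieldNormedType.Exports.
Local Open Scope classical_set_scope.
Local Open Scope ring_scope.

(* The cardinal kappa is represented by (the cardinality of) a type K.
   "|A| < kappa" is  A #<= [set: K] /\ ~ ([set: K] #<= A). *)
Definition card_lt_type {T : Type} (A : set T) (K : Type) : Prop :=
  (A #<= [set: K])%card /\ ~ ([set: K] #<= A)%card.

Definition unit_sphere (R : realType) (Z : normedModType R) : set Z :=
  [set x : Z | `|x| = 1].
Arguments unit_sphere : clear implicits.

Definition ASQ_lt {R : realType} (K : Type) (Z : normedModType R) : Prop :=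
  forall A : set Z, A `<=` unit_sphere R Z -> card_lt_type A K ->
  forall eps : R, 0 < eps ->
  exists2 y : Z, unit_sphere R Z y &
    forall x, A x -> `|x + y| <= 1 + eps /\ `|x - y| <= 1 + eps.

Definition SQ_lt {R : realType} (K : Type) (Z : normedModType R) : Prop :=
  forall A : set Z, A `<=` unit_sphere R Z -> card_lt_type A K ->
  exists2 y : Z, unit_sphere R Z y &
    forall x, A x -> `|x + y| <= 1 /\ `|x - y| <= 1.

(* Main.v *)
Require Import Defs.
From HB Require Import structures.
From mathcomp Require Import all_boot all_order all_algebra.
From mathcomp Require Import all_classical all_reals all_analysis.
From mathcomp Require Import ring lra.
Import Order.TTheory GRing.Theory Num.Theory.
Import numFieldNormedType.Exports.
Local Open Scope classical_set_scope.
Local Open Scope ring_scope.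
Set Implicit Arguments. Unset Strict Implicit. Unset Printing Implicit Defensive.

Lemma convex_step (R : realType) (Z : normedModType R) (u y : Z) (t e : R) :
  0 <= t -> t <= 1 -> `|u + y| <= 1 + e -> `|u - y| <= 1 + e ->
  `|t *: u + y| <= 1 + e /\ `|t *: u - y| <= 1 + e.
Proof.
move=> t0 t1 h1 h2.
have a0 : 0 <= (1 + t) / 2 by apply: divr_ge0; lra.
have b0 : 0 <= (1 - t) / 2 by apply: divr_ge0; lra.
have E1 : t *: u + y = ((1 + t) / 2) *: (u + y) - ((1 - t) / 2) *: (u - y).
  rewrite !scalerDr !scalerN opprD opprK addrACA -!scaleNr -!scalerDl.
  rewrite -{1}[y]scale1r; congr (_ *: _ + _ *: _); rewrite /GRing.scale /=; by field.
have E2 : t *: u - y = ((1 + t) / 2) *: (u - y) - ((1 - t) / 2) *: (u + y).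
  rewrite !scalerDr !scalerN opprD addrACA -!scaleNr -!scalerDl.
  rewrite -{1}[y]scale1r -scaleNr; congr (_ *: _ + _ *: _); by rewrite /GRing.scale /=; field.
have key : forall a b : Z, `|a| <= 1 + e -> `|b| <= 1 + e ->
    `|((1 + t) / 2) *: a - ((1 - t) / 2) *: b| <= 1 + e.
  move=> a b ha hb; apply: le_trans (ler_normB _ _) _.
  have n1 : `|1 + t| = 1 + t by rewrite ger0_norm //; lra.
  have n2 : `|1 - t| = 1 - t by rewrite ger0_norm //; lra.
  have n3 : `|2^-1 : R| = 2^-1 by rewrite ger0_norm // invr_ge0.
  rewrite !normrZ n1 n2 n3.
  have := ler_wpM2l a0 ha; have := ler_wpM2l b0 hb; lra.
by split; [have := key _ _ h1 h2; rewrite -E1 | have := key _ _ h2 h1; rewrite -E2].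
Qed.

Definition SQe (R : realType) (K : Type) (Z : normedModType R) (e : R) : Prop :=
  forall A : set Z, A `<=` unit_sphere R Z -> card_lt_type A K ->
  exists2 y : Z, unit_sphere R Z y &
    forall x, A x -> `|x + y| <= 1 + e /\ `|x - y| <= 1 + e.

Lemma card_lt_le (T U : Type) (K : Type) (A : set T) (B : set U) :
  (A #<= B)%card -> card_lt_type B K -> card_lt_type A K.
Proof.
move=> AB [BK KB]; split; first exact: card_le_trans AB BK.
by move=> KA; apply: KB; apply: card_le_trans KA AB.
Qed.

Lemma ball_step (R : realType) (Z : normedModType R) (e : R) (y : Z) (S : set Z) (x : Z) :
  0 <= e -> `|y| = 1 -> `|x| <= 1 ->
  (forall u, S u -> `|u + y| <= 1 + e /\ `|u - y| <= 1 + e) ->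
  (x != 0 -> S (`|x|^-1 *: x)) ->
  `|x + y| <= 1 + e /\ `|x - y| <= 1 + e.
Proof.
move=> e0 y1 x1 Hy HS.
have [->|x0] := eqVneq x 0.
  by rewrite add0r sub0r normrN y1; split; lra.
have [h1 h2] := Hy _ (HS x0).
have nx0 : 0 < `|x| by rewrite normr_gt0.
have := convex_step (normr_ge0 x) x1 h1 h2.
by rewrite scalerA divff ?scale1r // gt_eqF.
Qed.

Lemma fwdX (R : realType) (K : Type) (X Y : normedModType R) (e : R) :
  0 <= e -> SQe K X e -> SQe K (X * Y)%type e.
Proof.
move=> e0 HX A AS AK.
pose f (p : X * Y) : X := `|p.1|^-1 *: p.1.
pose B := f @` (A `&` [set p | p.1 != 0]).
have BS : B `<=` unit_sphere R X.
  move=> _ [p [_ /= p0] <-]; rewrite /unit_sphere /= /f normrZ normfV normr_id.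
  by rewrite mulVf // normr_eq0.
have BK : card_lt_type B K.
  apply: card_lt_le AK; apply: card_le_trans (card_image_le _ _) _.
  exact: subset_card_le (@subIsetl _ _ _).
have [y Sy Hy] := HX B BS BK.
exists (y, 0).
  by rewrite /unit_sphere /= prod_normE /= normr0 Sy max_l.
move=> p Ap; have := AS p Ap; rewrite /unit_sphere /= prod_normE => pm.
have p1 : `|p.1| <= 1 by rewrite -pm le_max lexx.
have p2 : `|p.2| <= 1 by rewrite -pm le_max lexx orbT.
have [h1 h2] := ball_step e0 Sy p1 Hy (fun p0 => imageP f (conj Ap p0)).
rewrite !prod_normE /= !ge_max subr0 addr0 h1 h2 /=.
split; apply: le_trans p2 _; lra.
Qed.

Lemma fwdY (R : realType) (K : Type) (X Y : normedModType R) (e : R) :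
  0 <= e -> SQe K Y e -> SQe K (X * Y)%type e.
Proof.
move=> e0 HY A AS AK.
pose f (p : X * Y) : Y := `|p.2|^-1 *: p.2.
pose B := f @` (A `&` [set p | p.2 != 0]).
have BS : B `<=` unit_sphere R Y.
  move=> _ [p [_ /= p0] <-]; rewrite /unit_sphere /= /f normrZ normfV normr_id.
  by rewrite mulVf // normr_eq0.
have BK : card_lt_type B K.
  apply: card_lt_le AK; apply: card_le_trans (card_image_le _ _) _.
  exact: subset_card_le (@subIsetl _ _ _).
have [y Sy Hy] := HY B BS BK.
exists (0, y).
  by rewrite /unit_sphere /= prod_normE /= normr0 Sy max_r.
move=> p Ap; have := AS p Ap; rewrite /unit_sphere /= prod_normE => pm.
have p1 : `|p.1| <= 1 by rewrite -pm le_max lexx.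
have p2 : `|p.2| <= 1 by rewrite -pm le_max lexx orbT.
have [h1 h2] := ball_step e0 Sy p2 Hy (fun p0 => imageP f (conj Ap p0)).
rewrite !prod_normE /= !ge_max subr0 addr0 h1 h2 /= !andbT.
split; apply: le_trans p1 _; lra.
Qed.
Lemma match_sets (T1 T2 : choiceType) (A1 : set T1) (A2 : set T2) (d1 : T1) (d2 : T2) :
 (exists s : T2 -> T1, (forall y, A2 y -> A1 (s y) \/ s y = d1) /\
     (forall x, A1 x -> exists2 y, A2 y & s y = x))
 \/ (exists t : T1 -> T2, (forall x, A1 x -> A2 (t x) \/ t x = d2) /\
     (forall y, A2 y -> exists2 x, A1 x & t x = y)).
Proof.
pose P := [set G : set (T1 * T2) | (forall p, G p -> A1 p.1 /\ A2 p.2) /\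
  (forall p q, G p -> G q -> p.1 = q.1 -> p = q) /\
  (forall p q, G p -> G q -> p.2 = q.2 -> p = q)].
have [G [[GA [G1 G2]] Gmax]] : exists G, P G /\ forall B, G `<` B -> ~ P B.
  apply: Zorn_bigcup => F FP Ftot; split; [|split].
  - by move=> p [X FX Xp]; have [] := FP X FX; move=> /(_ p Xp).
  - move=> p q [X FX Xp] [Z FZ Zq].
    have [XZ|ZX] := Ftot X Z FX FZ.
    + by have [_ [h _]] := FP Z FZ; apply: h => //; apply: XZ.
    + by have [_ [h _]] := FP X FX; apply: h => //; apply: ZX.
  - move=> p q [X FX Xp] [Z FZ Zq].
    have [XZ|ZX] := Ftot X Z FX FZ.
    + by have [_ [_ h]] := FP Z FZ; apply: h => //; apply: XZ.
    + by have [_ [_ h]] := FP X FX; apply: h => //; apply: ZX.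
have [h1|h1] := pselect (forall x, A1 x -> exists y, G (x, y)).
  left; exists (fun y => xget d1 (fun x => G (x, y))); split.
    move=> y _; have [ex|nx] := pselect (exists x, G (x, y)).
      by left; have := xgetPex d1 ex => /GA [].
    by right; apply: xgetPN => x Gx; apply: nx; exists x.
  move=> x /h1 [y Gxy]; exists y; first by have [] := GA _ Gxy.
  apply: xget_unique => // x' Gx'.
  by have := G2 _ _ Gx' Gxy erefl => -[].
have [h2|h2] := pselect (forall y, A2 y -> exists x, G (x, y)).
  right; exists (fun x => xget d2 (fun y => G (x, y))); split.
    move=> x _; have [ex|nx] := pselect (exists y, G (x, y)).
      by left; have := xgetPex d2 ex => /GA [].
    by right; apply: xgetPN => y Gy; apply: nx; exists y.
  move=> y /h2 [x Gxy]; exists x; first by have [] := GA _ Gxy.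
  apply: xget_unique => // y' Gy'.
  by have := G1 _ _ Gy' Gxy erefl => -[].
exfalso.
move/existsNP: h1 => [x /not_implyP [A1x nx]].
move/existsNP: h2 => [y /not_implyP [A2y ny]].
apply: (Gmax (G `|` [set (x, y)])).
  split; first by move=> p Gp; left.
  by move=> /(_ (x, y) (or_intror erefl)) Gxy; apply: nx; exists y.
split; [|split].
- by move=> p [/GA //|-> /=].
- move=> p q [Gp|->] [Gq|->] //= e.
  + exact: G1.
  + by exfalso; apply: nx; case: p Gp e => a b /= Gp eab; exists b; (rewrite -eab || rewrite eab).
  + by exfalso; apply: nx; case: q Gq e => a b /= Gq eab; exists b; (rewrite -eab || rewrite eab).
- move=> p q [Gp|->] [Gq|->] //= e.
  + exact: G2.
  + by exfalso; apply: ny; case: p Gp e => a b /= Gp eab; exists a; (rewrite -eab || rewrite eab).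
  + by exfalso; apply: ny; case: q Gq e => a b /= Gq eab; exists a; (rewrite -eab || rewrite eab).
Qed.

Lemma bwd_core (R : realType) (K : Type) (X Y : normedModType R) (e : R)
  (AX : set X) (AY : set Y) :
  SQe K (X * Y)%type e ->
  AX `<=` unit_sphere R X -> card_lt_type AX K ->
  AY `<=` unit_sphere R Y -> card_lt_type AY K ->
  (exists2 u, unit_sphere R X u &
     forall x, AX x -> `|x + u| <= 1 + e /\ `|x - u| <= 1 + e) \/
  (exists2 v, unit_sphere R Y v &
     forall y, AY y -> `|y + v| <= 1 + e /\ `|y - v| <= 1 + e).
Proof.
move=> H SX KX SY KY.
suff [C [CS [CK [C1 C2]]]] : exists C : set (X * Y),
    C `<=` unit_sphere R (X * Y)%type /\ card_lt_type C K /\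
    (forall x, AX x -> exists2 p, C p & p.1 = x) /\
    (forall y, AY y -> exists2 p, C p & p.2 = y).
  have [w Sw Hw] := H C CS CK.
  move: Sw; rewrite /unit_sphere /= prod_normE maxEle.
  case: ifP => _ w1.
    right; exists w.2 => // y /C2 [p Cp <-].
    have [h1 h2] := Hw p Cp; move: h1 h2; rewrite !prod_normE !ge_max /=.
    by move=> /andP[_ ->] /andP[_ ->].
  left; exists w.1 => // x /C1 [p Cp <-].
  have [h1 h2] := Hw p Cp; move: h1 h2; rewrite !prod_normE !ge_max /=.
  by move=> /andP[-> _] /andP[-> _].
have [[s [s1 s2]]|[t [t1 t2]]] := match_sets AX AY 0 0.
  exists ((fun y => (s y, y)) @` AY); split; [|split; [|split]].
  - move=> _ [y Ay <-]; rewrite /unit_sphere /= prod_normE (SY _ Ay).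
    apply: max_r; case: (s1 y Ay) => [/SX ->|->] //; by rewrite normr0.
  - exact: card_lt_le (card_image_le _ _) KY.
  - by move=> x /s2 [y Ay <-]; exists (s y, y) => //; exists y.
  - by move=> y Ay; exists (s y, y) => //; exists y.
exists ((fun x => (x, t x)) @` AX); split; [|split; [|split]].
- move=> _ [x Ax <-]; rewrite /unit_sphere /= prod_normE (SX _ Ax).
  apply: max_l; case: (t1 x Ax) => [/SY ->|->] //; by rewrite normr0.
- exact: card_lt_le (card_image_le _ _) KX.
- by move=> x Ax; exists (x, t x) => //; exists x.
- by move=> y /t2 [x Ax <-]; exists (x, t x) => //; exists x.
Qed.

Lemma bwd (R : realType) (K : Type) (X Y : normedModType R) (e : R) :
  SQe K (X * Y)%type e -> SQe K X e \/ SQe K Y e.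
Proof.
move=> H; have [hX|hX] := pselect (SQe K X e); [by left|right].
move=> AY SY KY; apply: contrapT => nY; apply: hX => AX SX KX.
have [//|[v Sv Hv]] := bwd_core H SX KX SY KY.
by exfalso; apply: nY; exists v.
Qed.

Lemma SQe_mono (R : realType) (K : Type) (Z : normedModType R) (e e' : R) :
  e <= e' -> SQe K Z e -> SQe K Z e'.
Proof.
move=> ee H A SA KA; have [y Sy Hy] := H A SA KA; exists y => // x Ax.
by have [h1 h2] := Hy x Ax; split; [apply: le_trans h1 _ | apply: le_trans h2 _]; rewrite lerD2l.
Qed.

Lemma SQE (R : realType) (K : Type) (Z : normedModType R) :
  SQ_lt K Z <-> SQe K Z 0.
Proof. by rewrite /SQ_lt /SQe addr0. Qed.

Lemma ASQE (R : realType) (K : Type) (Z : normedModType R) :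
  ASQ_lt K Z <-> forall e, 0 < e -> SQe K Z e.
Proof.
split=> [H e e0 A SA KA|H A SA KA e e0]; first exact: H.
exact: H.
Qed.

Unset Implicit Arguments.
Theorem corollary4p2 (R : realType) (X Y : completeNormedModType R) (K : Type) :
  infinite_set [set: K] ->
  (ASQ_lt K (X * Y)%type <-> ASQ_lt K X \/ ASQ_lt K Y) /\
  (SQ_lt K (X * Y)%type <-> SQ_lt K X \/ SQ_lt K Y).
Proof.
move=> _; split; last first.
  rewrite !SQE; split; first exact: bwd.
  by case; [apply: fwdX | apply: fwdY].
rewrite !ASQE; split; last first.
  by case=> H e e0; [apply: fwdX (H e e0) | apply: fwdY (H e e0)]; exact: ltW.
move=> H.
have [hX|hX] := pselect (forall e, 0 < e -> SQe K X e); first by left.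
have [hY|hY] := pselect (forall e, 0 < e -> SQe K Y e); first by right.
exfalso.
move/existsNP: hX => [eX /not_implyP [eX0 nX]].
move/existsNP: hY => [eY /not_implyP [eY0 nY]].
have m0 : 0 < Num.min eX eY by rewrite lt_min eX0 eY0.
case: (bwd (H _ m0)) => h.
  by apply: nX; apply: SQe_mono h; rewrite ge_min lexx.
by apply: nY; apply: SQe_mono h; rewrite ge_min lexx orbT.
Qed.
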